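(* For all $a,b\in\mathbb{B}^n$, \[ \mathrm{th}\left(\frac{\rho_{\mathbb{B}^n}(a,b)}{4}\right)\ge\mathrm{th}\left(\frac{h_{\mathbb{B}^n}(a,b)}{4}\right)\ge\frac{|a-b|}{\sqrt{4-|a+b|^2}}, \] with equality if $a=-b$.
   Context: $\mathbb{B}^n$ is the unit ball of $\mathbb{R}^n$. Hyperbolic metric: $\mathrm{sh}\frac{\rho_{\mathbb{B}^n}(a,b)}{2}=\frac{|a-b|}{\sqrt{(1-|a|^2)(1-|b|^2)}}$. Hilbert metric: for distinct $a,b$ in a bounded convex domain $G\subset\mathbb{R}^n$, let $u,v$ be the intersection points of the line through $a,b$ with $\partial G$, ordered $u,a,b,v$; $h_G(a,b)=\log\frac{|u-b||a-v|}{|u-a||b-v|}$, and $h_G(a,a)=0$. *)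

(* Defs.v *)
From HB Require Import structures.
From mathcomp Require Import all_boot all_order all_algebra.
From mathcomp Require Import all_classical all_reals all_analysis.
Set Implicit Arguments. Unset Strict Implicit. Unset Printing Implicit Defensive.
Import Order.TTheory GRing.Theory Num.Theory.
Local Open Scope classical_set_scope.
Local Open Scope ring_scope.

Section Defs.
Variable R : realType.
Variable n : nat.

Definition enorm (x : 'rV[R]_n) : R := Num.sqrt (\sum_(i < n) x 0 i ^+ 2).

Definition unit_ball : set 'rV[R]_n := [set x | enorm x < 1].

Definition sinh (x : R) : R := (expR x - expR (- x)) / 2.
Definition tanh (x : R) : R := (expR x - expR (- x)) / (expR x + expR (- x)).
Definition arsinh (y : R) : R := ln (y + Num.sqrt (y ^+ 2 + 1)).

(* hyperbolic metric of B^n: the nonnegative rho with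
   sh (rho/2) = |a-b| / sqrt((1-|a|^2)(1-|b|^2)), i.e. rho = 2 arsinh(...) *)
Definition rho_ball (a b : 'rV[R]_n) : R :=
  2 * arsinh (enorm (a - b) / Num.sqrt ((1 - enorm a ^+ 2) * (1 - enorm b ^+ 2))).

(* the point where the ray from p through q leaves the (bounded convex) domain G:
   p + t* (q - p) with t* = sup {t >= 0 | p + t (q - p) \in G}; it lies on the
   boundary of G, beyond q *)
Definition ray_exit (G : set 'rV[R]_n) (p q : 'rV[R]_n) : 'rV[R]_n :=
  p + (sup [set t : R | 0 <= t /\ G (p + t *: (q - p))]) *: (q - p).

(* Hilbert metric of a bounded convex domain G: with u, v the intersection
   points of the line through a, b with the boundary of G, ordered u, a, b, v *)
Definition hilbert (G : set 'rV[R]_n) (a b : 'rV[R]_n) : R :=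
  if a == b then 0 else
  let u := ray_exit G b a in
  let v := ray_exit G a b in
  ln (enorm (u - b) * enorm (a - v) / (enorm (u - a) * enorm (b - v))).

End Defs.

(* Main.v *)
Require Import Defs.
From HB Require Import structures.
From mathcomp Require Import all_boot all_order all_algebra.
From mathcomp Require Import all_classical all_reals all_analysis.
From mathcomp Require Import ring lra.
Import Order.TTheory GRing.Theory Num.Theory.
Set Implicit Arguments. Unset Strict Implicit.
Local Open Scope classical_set_scope.
Local Open Scope ring_scope.


Section Vec.
Variable R : realType.
Variable n : nat.
Implicit Types (x y z : 'rV[R]_n) (t : R).

Definition dot x y : R := \sum_(i < n) x 0 i * y 0 i.

Lemma dotC x y : dot x y = dot y x.
Proof. by apply: eq_bigr => i _; rewrite mulrC. Qed.

Lemma dotDl x y z : dot (x + y) z = dot x z + dot y z.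
Proof. rewrite /dot -big_split /=; apply: eq_bigr => i _; by rewrite !mxE mulrDl. Qed.

Lemma dotZl t x y : dot (t *: x) y = t * dot x y.
Proof. rewrite /dot mulr_sumr; apply: eq_bigr => i _; by rewrite !mxE mulrA. Qed.

Lemma dotNl x y : dot (- x) y = - dot x y.
Proof. rewrite /dot -sumrN; apply: eq_bigr => i _; by rewrite !mxE mulNr. Qed.

Lemma dotDr x y z : dot z (x + y) = dot z x + dot z y.
Proof. by rewrite dotC dotDl !(dotC z). Qed.
Lemma dotZr t x y : dot y (t *: x) = t * dot y x.
Proof. by rewrite dotC dotZl dotC. Qed.
Lemma dotNr x y : dot y (- x) = - dot y x.
Proof. by rewrite dotC dotNl dotC. Qed.

Lemma dot_ge0 x : 0 <= dot x x.
Proof. by apply: sumr_ge0 => i _; rewrite -expr2 sqr_ge0. Qed.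

Lemma enormE x : enorm x = Num.sqrt (dot x x).
Proof. by rewrite /enorm /dot; congr Num.sqrt; apply: eq_bigr => i _; rewrite expr2. Qed.

Lemma enorm_ge0 x : 0 <= enorm x.
Proof. by rewrite enormE sqrtr_ge0. Qed.

Lemma enorm2 x : enorm x ^+ 2 = dot x x.
Proof. by rewrite enormE sqr_sqrtr // dot_ge0. Qed.

Lemma enormZ t x : enorm (t *: x) = `|t| * enorm x.
Proof. by rewrite !enormE dotZl dotZr mulrA -expr2 sqrtrM ?sqr_ge0 // sqrtr_sqr. Qed.

Lemma enormN x : enorm (- x) = enorm x.
Proof. by rewrite !enormE dotNl dotNr opprK. Qed.

Lemma dot_quad x y t : dot (x + t *: y) (x + t *: y) = dot x x + 2 * t * dot x y + t ^+ 2 * dot y y.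
Proof. rewrite !dotDl !dotDr !dotZl !dotZr (dotC y x); ring. Qed.

Lemma cauchy_schwarz x y : dot x y ^+ 2 <= dot x x * dot y y.
Proof.
have H t : 0 <= dot x x + 2 * t * dot x y + t ^+ 2 * dot y y.
  by rewrite -dot_quad dot_ge0.
have := dot_ge0 x; have := dot_ge0 y.
move: H; set a := dot x x; set b := dot x y; set c := dot y y.
move=> H c0 a0.
have [c0'|cpos] := eqVneq c 0.
  have -> : b = 0.
    apply/eqP; apply/negP => /negP bne.
    have := H (- (a + 1) / (2 * b)).
    have -> : a + 2 * (- (a + 1) / (2 * b)) * b + (- (a + 1) / (2 * b)) ^+ 2 * c = -1.
      rewrite c0'; field; exact: bne.
    lra.
  by rewrite expr0n /= mulr_ge0.
have cgt : 0 < c by rewrite lt_neqAle eq_sym cpos c0.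
have := H (- b / c).
have -> : a + 2 * (- b / c) * b + (- b / c) ^+ 2 * c = (a * c - b ^+ 2) / c.
  by field.
rewrite pmulr_lge0 ?invr_gt0 //; lra.
Qed.

End Vec.

Section Exit.
Variable R : realType.
Variable n : nat.
Implicit Types (x y z p q : 'rV[R]_n) (t : R).

Lemma sqrt_lt1 (z : R) : (Num.sqrt z < 1) = (z < 1).
Proof. by have := ltr_sqrt z (@ltr01 R); rewrite sqrtr1. Qed.

Lemma ball_dot x : unit_ball x <-> dot x x < 1.
Proof. by rewrite /unit_ball /= enormE sqrt_lt1. Qed.

Lemma quad_root (c b A t : R) : 0 < c -> 0 < A -> 0 <= t ->
  let sq := Num.sqrt (b ^+ 2 + c * A) in
  (c * t ^+ 2 + 2 * b * t - A < 0) <-> (t < (- b + sq) / c).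
Proof.
move=> c0 A0 t0 sq.
have sq0 : 0 <= sq by rewrite sqrtr_ge0.
have sq2 : sq ^+ 2 = b ^+ 2 + c * A by rewrite sqr_sqrtr // addr_ge0 ?sqr_ge0 ?mulr_ge0 ?ltW.
rewrite ltr_pdivlMr //; split => H.
  rewrite ltNge; apply/negP => H'.
  have : 0 <= c * t + b - sq by lra.
  have : c * (c * t ^+ 2 + 2 * b * t - A) < 0 by rewrite pmulr_rlt0.
  have e : c * (c * t ^+ 2 + 2 * b * t - A) = (c * t + b) ^+ 2 - sq ^+ 2 by rewrite sq2; ring.
  rewrite e.
  have : sq ^+ 2 <= (c * t + b) ^+ 2.
    rewrite -subr_ge0 subr_sqr; apply: mulr_ge0; lra.
  lra.
have h1 : b > - sq by nra.
have h2 : (c * t + b) ^+ 2 < sq ^+ 2.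
  rewrite -subr_gt0 subr_sqr; apply: mulr_gt0; nra.
have : c * (c * t ^+ 2 + 2 * b * t - A) < 0.
  have e : c * (c * t ^+ 2 + 2 * b * t - A) = (c * t + b) ^+ 2 - sq ^+ 2 by rewrite sq2; ring.
  rewrite e; lra.
by rewrite pmulr_rlt0.
Qed.

Lemma ray_exitE p q : unit_ball p -> 0 < dot (q - p) (q - p) ->
  exists s, [/\ ray_exit (@unit_ball R n) p q = p + s *: (q - p),
     dot (q - p) (q - p) * s ^+ 2 + 2 * dot p (q - p) * s + dot p p - 1 = 0, 0 < s &
     forall t, 0 <= t -> (unit_ball (p + t *: (q - p)) <-> t < s)].
Proof.
move=> /ball_dot pin c0.
set d := q - p; set c := dot d d; set b := dot p d; set A := 1 - dot p p.
have A0 : 0 < A by rewrite /A subr_gt0.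
set sq := Num.sqrt (b ^+ 2 + c * A).
set s0 := (- b + sq) / c.
have sq0 : 0 <= sq by rewrite sqrtr_ge0.
have sq2 : sq ^+ 2 = b ^+ 2 + c * A by rewrite sqr_sqrtr // addr_ge0 ?sqr_ge0 ?mulr_ge0 ?ltW.
have char t : 0 <= t -> (unit_ball (p + t *: d) <-> t < s0).
  move=> t0; rewrite ball_dot dot_quad -/c -/b.
  rewrite -(@quad_root c b A t c0 A0 t0) -/sq -/s0.
  rewrite /A; split; lra.
have s0pos : 0 < s0.
  apply/(@quad_root c b A 0 c0 A0 (le_refl 0)); lra.
exists s0; split => //.
- rewrite /ray_exit; congr (p + _ *: _).
  have -> : [set t : R | 0 <= t /\ unit_ball (p + t *: (q - p))] = [set` `[0, s0[%R].
    apply: funext => t; apply: propext; rewrite /= in_itv /=; split.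
      by move=> [t0 /(char t t0) ->]; rewrite t0.
    by move=> /andP[t0 ts]; split => //; apply/(char t t0).
  by rewrite sup_itv // bnd_simp.
- have e : s0 * c = - b + sq by rewrite /s0 divfK // gt_eqF.
  have : c * (c * s0 ^+ 2 + 2 * b * s0 - A) = 0.
    have -> : c * (c * s0 ^+ 2 + 2 * b * s0 - A) = (s0 * c + b) ^+ 2 - sq ^+ 2 by rewrite sq2; ring.
    by rewrite e; ring.
  move/eqP; rewrite mulf_eq0 gt_eqF //= /A => /eqP H.
  rewrite -[RHS]H; ring.
Qed.

End Exit.

Section Core.
Variable R : realType.

Lemma sq_le (x y : R) : 0 <= y -> x ^+ 2 <= y ^+ 2 -> x <= y.
Proof. move=> y0 h; rewrite leNgt; apply/negP => xy; nra. Qed.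

Lemma sq_eq (x y : R) : 0 <= x -> 0 <= y -> x ^+ 2 = y ^+ 2 -> x = y.
Proof. move=> x0 y0 h; apply/eqP; rewrite eq_le; apply/andP; split; apply: sq_le; lra. Qed.

Lemma alg_facts (t1 t2 D2 aa bb b : R) :
  1 < t1 -> 1 < t2 -> 0 < D2 ->
  D2 * t2 ^+ 2 + 2 * b * t2 + aa - 1 = 0 ->
  D2 * t1 ^+ 2 + 2 * (- (b + D2)) * t1 + bb - 1 = 0 ->
  bb = aa + 2 * b + D2 ->
  [/\ 1 - aa = D2 * (t1 - 1) * t2, 1 - bb = D2 * t1 * (t2 - 1) &
      D2 * (D2 * (t1 + t2 - 1) ^+ 2 - 4) = 4 * (b ^+ 2 - aa * D2)].
Proof.
move=> t11 t21 D0 R2 R1 hbb.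
have hsum : (t1 + t2 - 1) * (D2 * (t2 - t1 + 1) + 2 * b) = 0.
  rewrite -[RHS](subr0 0) -{1}R2 -R1 hbb; ring.
have hb : b = - D2 * (t2 - t1 + 1) / 2.
  move/eqP: hsum; rewrite mulf_eq0 => /orP[/eqP|/eqP] h; first lra.
  lra.
have hA : 1 - aa = D2 * (t1 - 1) * t2.
  have -> : 1 - aa = D2 * t2 ^+ 2 + 2 * b * t2 by lra.
  rewrite hb; by field.
split => //.
  rewrite hbb; have -> : 1 - (aa + 2 * b + D2) = (1 - aa) - 2 * b - D2 by ring.
  rewrite hA hb; by field.
have -> : aa = 1 - D2 * (t1 - 1) * t2 by lra.
rewrite hb; by field.
Qed.

Lemma ineq1 (t1 t2 D2 w S K : R) :
  1 < t1 -> 1 < t2 -> 0 < D2 -> D2 * (t1 + t2 - 1) ^+ 2 <= 4 ->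
  0 <= w -> w ^+ 2 = 1 / (D2 * t1 * t2 * ((t1 - 1) * (t2 - 1))) ->
  0 <= S -> S ^+ 2 = w ^+ 2 + 1 ->
  0 < K -> K ^+ 2 = t1 * t2 / ((t1 - 1) * (t2 - 1)) ->
  (K - 1) / (K + 1) <= (w + S - 1) / (w + S + 1).
Proof.
move=> t11 t21 D0 F3 w0 hw2 S0 hS K0 hK.
have t1p : 0 < t1 - 1 by lra.
have t2p : 0 < t2 - 1 by lra.
have c1p : 0 <= 4 * K ^+ 2 * w ^+ 2 - (K ^+ 2 - 1) ^+ 2.
  have -> : 4 * K ^+ 2 * w ^+ 2 - (K ^+ 2 - 1) ^+ 2 =
     (4 - D2 * (t1 + t2 - 1) ^+ 2) / (D2 * ((t1 - 1) * (t2 - 1)) ^+ 2).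
    rewrite hK hw2; field.
    by rewrite !gt_eqF //; lra.
  apply: divr_ge0; first lra.
  by apply: mulr_ge0; [lra | exact: sqr_ge0].
have K1 : 0 <= K ^+ 2 - 1.
  have -> : K ^+ 2 - 1 = (t1 + t2 - 1) / ((t1 - 1) * (t2 - 1)).
    by rewrite hK; field; rewrite !gt_eqF //; lra.
  by apply: divr_ge0; [lra | apply: mulr_ge0; lra].
have h2Kw : K ^+ 2 - 1 <= 2 * K * w.
  apply: sq_le; first by rewrite !mulr_ge0 //; lra.
  have -> : (2 * K * w) ^+ 2 = 4 * K ^+ 2 * w ^+ 2 by ring.
  lra.
clear hK hw2 F3 c1p.
have KE : K <= w + S.
  rewrite leNgt; apply/negP => H.
  have h1 : S ^+ 2 < (K - w) ^+ 2.
    rewrite -subr_gt0 subr_sqr; apply: mulr_gt0; lra.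
  nra.
have -> : (w + S - 1) / (w + S + 1) = (K - 1) / (K + 1) + 2 * (w + S - K) / ((w + S + 1) * (K + 1)).
  by field; rewrite !gt_eqF //; lra.
rewrite lerDl; apply: divr_ge0; first lra.
apply: mulr_ge0; lra.
Qed.

Lemma ineq2 (t1 t2 K r : R) :
  1 < t1 -> 1 < t2 ->
  0 < K -> K ^+ 2 = t1 * t2 / ((t1 - 1) * (t2 - 1)) ->
  0 <= r -> r ^+ 2 = 1 / (4 * t1 * t2 - 2 * t1 - 2 * t2 + 1) ->
  r <= (K - 1) / (K + 1).
Proof.
move=> t11 t21 K0 hK r0 hr2.
have t1p : 0 < t1 - 1 by lra.
have t2p : 0 < t2 - 1 by lra.
set P := (t1 - 1) * (t2 - 1).
have P0 : 0 < P by rewrite mulr_gt0.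
set Q := 4 * t1 * t2 - 2 * t1 - 2 * t2 + 1.
have Q1 : 1 < Q.
  have -> : Q = 1 + 2 * (t1 * (t2 - 1)) + 2 * (t2 * (t1 - 1)) by rewrite /Q; ring.
  have : 0 < t1 * (t2 - 1) by apply: mulr_gt0; lra.
  have : 0 < t2 * (t1 - 1) by apply: mulr_gt0; lra.
  lra.
have K1 : 0 <= K ^+ 2 - 1.
  have -> : K ^+ 2 - 1 = (t1 + t2 - 1) / P.
    by rewrite hK /P; field; rewrite !gt_eqF //; lra.
  by apply: divr_ge0; lra.
have r1 : r < 1.
  rewrite ltNge; apply/negP => H.
  have : 1 <= r ^+ 2 by rewrite -(expr1n _ 2) ler_pXn2r // ?nnegrE; lra.
  rewrite hr2 -/Q ler_pdivlMr; lra.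
have key2 : ((K ^+ 2 - 1) * (1 + r ^+ 2)) ^+ 2 - (2 * r * (K ^+ 2 + 1)) ^+ 2
    = (Q + 1) ^+ 2 * (t1 - t2) ^+ 2 / (P ^+ 2 * Q ^+ 2).
  have -> : (2 * r * (K ^+ 2 + 1)) ^+ 2 = 4 * r ^+ 2 * (K ^+ 2 + 1) ^+ 2 by ring.
  rewrite hK hr2 /P /Q; field.
  rewrite -/Q !gt_eqF //; lra.
have h3 : 2 * r * (K ^+ 2 + 1) <= (K ^+ 2 - 1) * (1 + r ^+ 2).
  apply: sq_le; first by rewrite mulr_ge0 // addr_ge0 // sqr_ge0.
  have : 0 <= (Q + 1) ^+ 2 * (t1 - t2) ^+ 2 / (P ^+ 2 * Q ^+ 2).
    by apply: divr_ge0; apply: mulr_ge0; exact: sqr_ge0.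
  rewrite -key2; lra.
clear key2 hK hr2.
have h4 : (1 + r) ^+ 2 <= (K * (1 - r)) ^+ 2.
  have e : (K * (1 - r)) ^+ 2 - (1 + r) ^+ 2 = (K ^+ 2 - 1) * (1 + r ^+ 2) - 2 * r * (K ^+ 2 + 1) by ring.
  lra.
have h5 : 1 + r <= K * (1 - r) by apply: sq_le => //; rewrite mulr_ge0 //; lra.
rewrite ler_pdivlMr; last lra.
lra.
Qed.

Lemma eqcase (t D2 w S K r : R) :
  1 < t -> 0 < D2 -> D2 * (t + t - 1) ^+ 2 = 4 ->
  0 <= w -> w ^+ 2 = 1 / (D2 * t * t * ((t - 1) * (t - 1))) ->
  0 <= S -> S ^+ 2 = w ^+ 2 + 1 ->
  0 < K -> K ^+ 2 = t * t / ((t - 1) * (t - 1)) ->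
  0 <= r -> r ^+ 2 = 1 / (4 * t * t - 2 * t - 2 * t + 1) ->
  (w + S - 1) / (w + S + 1) = (K - 1) / (K + 1) /\ (K - 1) / (K + 1) = r.
Proof.
move=> t1 D0 F w0 hw2 S0 hS K0 hK r0 hr2.
have t0 : 0 < t by lra.
have tp : 0 < t - 1 by lra.
have h21 : 0 < 2 * t - 1 by lra.
have F3q : D2 = 4 / (2 * t - 1) ^+ 2.
  apply: (@mulIf _ ((2 * t - 1) ^+ 2)); first by rewrite expf_neq0 // gt_eqF.
  rewrite divfK; last by rewrite expf_neq0 // gt_eqF.
  by rewrite -F; congr (_ * _ ^+ 2); ring.
have hK' : K = t / (t - 1).
  apply: sq_eq; [lra | by apply: divr_ge0; lra | ].
  by rewrite hK; field; rewrite !gt_eqF.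
have hw' : w = (2 * t - 1) / (2 * t * (t - 1)).
  apply: sq_eq; [lra | by apply: divr_ge0; [lra | apply: mulr_ge0; lra] | ].
  by rewrite hw2 F3q; field; rewrite !gt_eqF.
have hS' : S = (2 * t ^+ 2 - 2 * t + 1) / (2 * t * (t - 1)).
  apply: sq_eq; [lra | apply: divr_ge0; [| apply: mulr_ge0; lra] | ].
    have -> : 2 * t ^+ 2 - 2 * t + 1 = t ^+ 2 + (t - 1) ^+ 2 by ring.
    by apply: addr_ge0; exact: sqr_ge0.
  by rewrite hS hw'; field; rewrite !gt_eqF.
have hr' : r = 1 / (2 * t - 1).
  apply: sq_eq; [lra | by apply: divr_ge0; lra | ].
  rewrite hr2; field.
  have -> : 4 * t * t - 2 * t - 2 * t + 1 = (2 * t - 1) ^+ 2 by ring.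
  by rewrite expf_neq0 // gt_eqF.
have pp : 0 < 2 * t - 1 + (2 * t ^+ 2 - 2 * t + 1) + 2 * t * (t - 1).
  have -> : 2 * t - 1 + (2 * t ^+ 2 - 2 * t + 1) + 2 * t * (t - 1) = (2 * t) * (2 * t - 1) by ring.
  by apply: mulr_gt0; lra.
rewrite hK' hw' hS' hr'; split; field; rewrite !gt_eqF //; lra.
Qed.

End Core.

Section Main.
Variable R : realType.
Variable n : nat.
Implicit Types (x y : 'rV[R]_n).


Lemma dot_gt0 x : x != 0 -> 0 < dot x x.
Proof.
move=> xn0; rewrite lt_neqAle dot_ge0 andbT eq_sym; apply: contra xn0 => /eqP H.
have h0 : forall i : 'I_n, true -> 0 <= x 0 i * x 0 i by move=> i _; rewrite -expr2 sqr_ge0.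
have := psumr_eq0P h0 H => hi.
apply/eqP/rowP => i; rewrite !mxE.
by apply/eqP; rewrite -sqrf_eq0 expr2; apply/eqP; apply: hi.
Qed.

Lemma enorm0 : enorm (0 : 'rV[R]_n) = 0.
Proof. by rewrite /enorm big1 ?sqrtr0 // => i _; rewrite mxE expr0n. Qed.

Lemma tanh4 (z : R) : tanh (z / 4) = (expR (z / 2) - 1) / (expR (z / 2) + 1).
Proof.
rewrite /tanh expRN.
have -> : z / 2 = z / 4 + z / 4 by field.
rewrite expRD; set e := expR (z / 4).
have e0 : 0 < e by exact: expR_gt0.
field; rewrite !gt_eqF //; nra.
Qed.

End Main.

Unset Implicit Arguments. Set Strict Implicit.

Theorem corollary3p10 (R : realType) (n : nat) (a b : 'rV[R]_n) :
  unit_ball a -> unit_ball b ->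
  [/\ tanh (rho_ball a b / 4) >= tanh (hilbert (@unit_ball R n) a b / 4),
      tanh (hilbert (@unit_ball R n) a b / 4)
        >= enorm (a - b) / Num.sqrt (4 - enorm (a + b) ^+ 2)
    & a = - b ->
      tanh (rho_ball a b / 4) = tanh (hilbert (@unit_ball R n) a b / 4) /\
      tanh (hilbert (@unit_ball R n) a b / 4)
        = enorm (a - b) / Num.sqrt (4 - enorm (a + b) ^+ 2)].
Proof.
move=> ha hb.
have [<-|hne] := eqVneq a b.
  have hz : hilbert (@unit_ball R n) a a = 0 by rewrite /hilbert eqxx.
  have rz : rho_ball a a = 0.
    by rewrite /rho_ball /arsinh subrr enorm0 mul0r expr0n /= !add0r sqrtr1 ln1 mulr0.
  have th0 : tanh 0 = 0 :> R by rewrite /tanh oppr0 subrr mul0r.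
  rewrite hz rz subrr enorm0 !mul0r th0.
  by split => //.
set d2 := b - a.
have D2pos : 0 < dot d2 d2 by apply: dot_gt0; rewrite /d2 subr_eq0 eq_sym.
have dab : dot (a - b) (a - b) = dot d2 d2 by rewrite /d2 -opprB dotNl dotNr opprK.
have D2pos' : 0 < dot (a - b) (a - b) by rewrite dab.
have [t2 [hv root2 t2pos char2]] := ray_exitE ha D2pos.
have [t1 [hu root1 t1pos char1]] := ray_exitE hb D2pos'.
have t21 : 1 < t2 by apply/char2 => //; rewrite scale1r addrC subrK.
have t11 : 1 < t1 by apply/char1 => //; rewrite scale1r addrC subrK.
set D2 := dot d2 d2.
set aa := dot a a. set bb := dot b b. set be := dot a d2.
have hbb : bb = aa + 2 * be + D2.
  have -> : bb = dot (a + 1 *: d2) (a + 1 *: d2) by rewrite scale1r /d2 addrC subrK.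
  by rewrite dot_quad -/aa -/be -/D2; ring.
have hbab : dot b (a - b) = - (be + D2).
  rewrite -opprB dotNr /be /D2 -dotDl; congr (- dot _ _).
  by rewrite /d2 addrC subrK.
move: root1; rewrite dab hbab -/bb -/D2 => root1.
move: root2; rewrite -/D2 -/be -/aa => root2.
have [hA hB F3e] := alg_facts t11 t21 D2pos root2 root1 hbb.
move: hA hB F3e D2pos; rewrite -/D2 => hA hB F3e D2pos.
have CS : be ^+ 2 <= aa * D2 by exact: cauchy_schwarz.
have F3 : D2 * (t1 + t2 - 1) ^+ 2 <= 4.
  have : D2 * (D2 * (t1 + t2 - 1) ^+ 2 - 4) <= 0 by rewrite F3e; lra.
  rewrite pmulr_rle0 //; lra.
set d := enorm (a - b).
have hd2 : d ^+ 2 = D2 by rewrite /d enorm2 dab.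
have d0 : 0 < d by rewrite /d enormE sqrtr_gt0.
set X := t1 * t2 / ((t1 - 1) * (t2 - 1)).
have X0 : 0 < X by apply: divr_gt0; [apply: mulr_gt0 | apply: mulr_gt0]; lra.
have hh : hilbert (@unit_ball R n) a b = ln X.
  rewrite /hilbert (negbTE hne) /= hu hv.
  have e1 : b + t1 *: (a - b) - b = t1 *: (a - b) by apply/rowP => i; rewrite !mxE; ring.
  have e2 : a - (a + t2 *: d2) = t2 *: (a - b) by apply/rowP => i; rewrite !mxE; ring.
  have e3 : b + t1 *: (a - b) - a = (t1 - 1) *: (a - b) by apply/rowP => i; rewrite !mxE; ring.
  have e4 : b - (a + t2 *: d2) = (t2 - 1) *: (a - b) by apply/rowP => i; rewrite !mxE; ring.
  rewrite e1 e2 e3 e4 !enormZ -/d !ger0_norm; try lra.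
  congr ln; rewrite /X; field.
  by rewrite !gt_eqF //; lra.
have P0 : 0 < (t1 - 1) * (t2 - 1) by apply: mulr_gt0; lra.
set K := expR (ln X / 2).
have K0 : 0 < K by exact: expR_gt0.
have hK : K ^+ 2 = X.
  by rewrite /K expr2 -expRD -splitr lnK // posrE.
set w := d / Num.sqrt ((1 - enorm a ^+ 2) * (1 - enorm b ^+ 2)).
have AB0 : 0 < (1 - aa) * (1 - bb).
  rewrite hA hB; have ? : 0 < t1 - 1 by lra.
  have ? : 0 < t2 - 1 by lra.
  by rewrite !mulr_gt0 //; lra.
have w0 : 0 <= w by apply: divr_ge0; [lra | exact: sqrtr_ge0].
have hw2 : w ^+ 2 = 1 / (D2 * t1 * t2 * ((t1 - 1) * (t2 - 1))).
  rewrite /w expr_div_n hd2 !enorm2 -/aa -/bb sqr_sqrtr; last exact: ltW.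
  rewrite hA hB; field.
  by rewrite !gt_eqF //; lra.
set S := Num.sqrt (w ^+ 2 + 1).
have S0 : 0 <= S by exact: sqrtr_ge0.
have hS : S ^+ 2 = w ^+ 2 + 1 by rewrite sqr_sqrtr // addr_ge0 // sqr_ge0.
have hrho : expR (rho_ball a b / 2) = w + S.
  have -> : rho_ball a b / 2 = arsinh w by rewrite /rho_ball -/d -/w; field.
  rewrite /arsinh -/S lnK // posrE.
  have : 0 < S by rewrite sqrtr_gt0; have := sqr_ge0 w; lra.
  lra.
set r := d / Num.sqrt (4 - enorm (a + b) ^+ 2).
have hab2 : enorm (a + b) ^+ 2 = 2 * aa + 2 * bb - D2.
  rewrite enorm2 /aa /bb /D2 /d2 !dotDl !dotDr !dotNl !dotNr (dotC b a); ring.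
have r0 : 0 <= r by apply: divr_ge0; [lra | exact: sqrtr_ge0].
have hr2 : r ^+ 2 = 1 / (4 * t1 * t2 - 2 * t1 - 2 * t2 + 1).
  have E0 : 4 - enorm (a + b) ^+ 2 = D2 * (4 * t1 * t2 - 2 * t1 - 2 * t2 + 1).
    rewrite hab2.
    have -> : 4 - (2 * aa + 2 * bb - D2) = 2 * (1 - aa) + 2 * (1 - bb) + D2 by ring.
    by rewrite hA hB; ring.
  have Q0 : 0 < 4 * t1 * t2 - 2 * t1 - 2 * t2 + 1.
    have -> : 4 * t1 * t2 - 2 * t1 - 2 * t2 + 1 = 1 + 2 * (t1 * (t2 - 1)) + 2 * (t2 * (t1 - 1)) by ring.
    have : 0 < t1 * (t2 - 1) by apply: mulr_gt0; lra.
    have : 0 < t2 * (t1 - 1) by apply: mulr_gt0; lra.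
    lra.
  rewrite /r expr_div_n hd2 E0 sqr_sqrtr; last by apply: mulr_ge0; lra.
  by field; rewrite !gt_eqF.
rewrite !tanh4 hh hrho -/K -/d -/r.
split.
- exact: ineq1 t11 t21 D2pos F3 w0 hw2 S0 hS K0 hK.
- exact: ineq2 t11 t21 K0 hK r0 hr2.
move=> hab.
have t12 : t1 = t2.
  have eqv t : 0 <= t -> (t < t1 <-> t < t2).
    move=> t0.
    have hv' : b + t *: (a - b) = - (a + t *: d2).
      by rewrite /d2 hab; apply/rowP => i; rewrite !mxE; ring.
    have hball : unit_ball (b + t *: (a - b)) <-> unit_ball (a + t *: d2).
      by rewrite hv' /unit_ball /= enormN.
    split => H.
      by apply/(char2 t t0)/hball/(char1 t t0).
    by apply/(char1 t t0)/hball/(char2 t t0).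
  apply/eqP; rewrite eq_le; apply/andP; split; rewrite leNgt; apply/negP => H.
    by have := (eqv t2 (ltW t2pos)).1 H; rewrite ltxx.
  by have := (eqv t1 (ltW t1pos)).2 H; rewrite ltxx.
have CSe : be ^+ 2 = aa * D2.
  rewrite /be /aa /D2 /d2 hab !dotDl !dotDr !dotNl !dotNr; ring.
move: F3e hw2 hK hr2; rewrite /X CSe subrr mulr0 -t12 => F3e hw2 hK hr2.
have F : D2 * (t1 + t1 - 1) ^+ 2 = 4.
  move/eqP: F3e; rewrite mulf_eq0 gt_eqF //= subr_eq0 => /eqP //.
exact: eqcase t11 D2pos F w0 hw2 S0 hS K0 hK r0 hr2.
Qed.
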